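(* Let $(G,P)$ be a quasi-lattice ordered group. The following are equivalent: (1) $(G,P)$ has a FESSPE; (2) $c_0(P)\subseteq B_P$; (3) $c_0(P)$ is an essential ideal in $B_P$; (4) $c_0(\iota(P))$ is an essential ideal in $\mathcal D$.
   Context: Quasi-lattice ordered group $(G,P)$: $G$ discrete, $P\subseteq G$ subsemigroup with $P\cap P^{-1}=\{e\}$, and for $x\le y\iff x^{-1}y\in P$ elements with a common upper bound in $P$ have a least one in $P$. A FESSPE is a finite $F\subseteq P\setminus\{e\}$ with $FP=P\setminus\{e\}$. For $s\in P$, $1_s\in\ell^\infty(P)$ is the characteristic function of $\{t\in P:s\le t\}$, and $B_P=\overline{\mathrm{span}}\{1_s:s\in P\}\subseteq\ell^\infty(P)$. On $\ell^2(P)$ with basis $\{\varepsilon_t\}$, $T_s\varepsilon_t=\varepsilon_{st}$ and $\mathcal D=\overline{\mathrm{span}}\{T_sT_s^*:s\in P\}$; note $T_sT_s^*$ is the multiplication operator $M_{1_s}$, so $\mathcal D=\{M_f:f\in B_P\}$. The spectrum of $\mathcal D$ is identified with Nica's space $\Omega$ of nonempty hereditary directed subsets of $P$, and $\iota:P\to\Omega$, $\iota(t)=\{s\in P:s\le t\}$; $c_0(\iota(P))$ denotes the set of multiplication operators $\{M_f:f\in c_0(P)\}$ on $\ell^2(P)$ (the functions on $\Omega$ supported on $\iota(P)$ vanishing at infinity there). *)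

(* Defs.v *)
From mathcomp Require Import all_boot all_algebra complex.
From mathcomp Require Import boolp classical_sets reals Rstruct.

Set Implicit Arguments.
Unset Strict Implicit.
Unset Printing Implicit Defensive.

Import GRing.Theory Num.Theory.
Local Open Scope ring_scope.
Local Open Scope complex_scope.
Local Open Scope classical_set_scope.

Definition CC : Type := (Rdefinitions.R)[i].

Record is_group (G : Type) (mul : G -> G -> G) (e : G) (inv : G -> G) : Prop := {
  grp_mulA : forall x y z, mul x (mul y z) = mul (mul x y) z;
  grp_mul1g : forall x, mul e x = x;
  grp_mulg1 : forall x, mul x e = x;
  grp_mulVg : forall x, mul (inv x) x = e;
  grp_mulgV : forall x, mul x (inv x) = e }.

Section QLO.
Variables (G : Type) (mul : G -> G -> G) (e : G) (inv : G -> G) (P : set G).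

Definition leP (x y : G) : Prop := P (mul (inv x) y).

Record quasi_lattice_ordered : Prop := {
  qlo_group : is_group mul e inv;
  qlo_semigroup : forall x y, P x -> P y -> P (mul x y);
  qlo_cap : forall x, (P x /\ P (inv x)) <-> x = e;
  qlo_lub : forall x y, P x -> P y ->
     (exists z, P z /\ leP x z /\ leP y z) ->
     exists z, [/\ P z, leP x z, leP y z &
                 forall w, P w -> leP x w -> leP y w -> leP z w] }.

Definition has_FESSPE : Prop :=
  exists F : seq G,
    (forall f, List.In f F -> P f /\ f <> e) /\
    (forall x, (P x /\ x <> e) <->
               exists f p, [/\ List.In f F, P p & x = mul f p]).

Definition Ptype : Type := {x : G | P x}.

Definition bounded (f : Ptype -> CC) : Prop :=
  exists M : Rdefinitions.R, forall t, `|f t| <= M%:C.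

Definition chi (s : G) : Ptype -> CC :=
  fun t => if pselect (leP s (proj1_sig t)) then 1 else 0.

Definition fadd (f g : Ptype -> CC) : Ptype -> CC := fun t => f t + g t.
Definition fscale (c : CC) (f : Ptype -> CC) : Ptype -> CC := fun t => c * f t.
Definition fmul (f g : Ptype -> CC) : Ptype -> CC := fun t => f t * g t.
Definition fzero : Ptype -> CC := fun _ => 0.

Definition supnorm_le (f g : Ptype -> CC) (eps : Rdefinitions.R) : Prop :=
  forall t, `|f t - g t| <= eps%:C.

Definition c0_P : set (Ptype -> CC) :=
  [set f | forall eps : Rdefinitions.R, 0 < eps ->
     exists K : seq Ptype, forall t, ~ List.In t K -> `|f t| <= eps%:C].

End QLO.

(** ** Generic linear span and norm closure in a complex algebra A,
    where [dle x y eps] means ||x - y|| <= eps. *)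
Section Generic.
Variables (A : Type) (add : A -> A -> A) (scale : CC -> A -> A)
          (amul : A -> A -> A) (zero : A)
          (dle : A -> A -> Rdefinitions.R -> Prop).

Definition span (S : set A) : set A :=
  [set x | exists n (c : 'I_n -> CC) (g : 'I_n -> A),
     (forall i, S (g i)) /\
     x = \big[add/zero]_(i < n) scale (c i) (g i)].

Definition nclosure (S : set A) : set A :=
  [set x | forall eps : Rdefinitions.R, 0 < eps -> exists2 y, S y & dle x y eps].

Definition closed_ideal (B I : set A) : Prop :=
  [/\ I `<=` B,
      I zero /\
      (forall x y, I x -> I y -> I (add x y)),
      (forall c x, I x -> I (scale c x)),
      (forall a x, B a -> I x -> I (amul a x) /\ I (amul x a)) &
      (forall x, B x -> nclosure I x -> I x)].

Definition essential_ideal (B I : set A) : Prop :=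
  closed_ideal B I /\
  forall J, closed_ideal B J -> (exists x, J x /\ x <> zero) ->
    exists x, [/\ I x, J x & x <> zero].

End Generic.

Section Operators.
Variables (G : Type) (mul : G -> G -> G) (e : G) (inv : G -> G) (P : set G).

Local Notation Pt := (Ptype P).

Definition sqnorm_on n (k : 'I_n -> Pt) (xi : Pt -> CC) : CC :=
  \sum_(i < n) `|xi (k i)| ^+ 2.

Definition is_l2 (xi : Pt -> CC) : Prop :=
  exists N : Rdefinitions.R, forall n (k : 'I_n -> Pt), injective k ->
     sqnorm_on k xi <= N%:C.

Definition l2 : Type := {xi : Pt -> CC | is_l2 xi}.

Definition Op : Type := l2 -> (Pt -> CC).

(** ||eta||_2 <= c ||xi||_2 *)
Definition l2_le (eta xi : Pt -> CC) (c : Rdefinitions.R) : Prop :=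
  forall N : Rdefinitions.R,
    (forall n (k : 'I_n -> Pt), injective k -> sqnorm_on k xi <= N%:C) ->
    forall n (k : 'I_n -> Pt), injective k ->
      sqnorm_on k eta <= (c ^+ 2 * N)%:C.

Definition opadd (S T : Op) : Op := fun xi t => S xi t + T xi t.
Definition opscale (c : CC) (S : Op) : Op := fun xi t => c * S xi t.
Definition opzero : Op := fun _ _ => 0.
Definition opcomp (S T : Op) : Op := fun xi =>
  match pselect (is_l2 (T xi)) with
  | left h => S (exist _ (T xi) h)
  | right _ => fun _ => 0
  end.
Definition op_le (S T : Op) (eps : Rdefinitions.R) : Prop :=
  forall xi : l2, l2_le (fun t => S xi t - T xi t) (proj1_sig xi) eps.

Definition extG (xi : Pt -> CC) (g : G) : CC :=
  match pselect (P g) with left h => xi (exist _ g h) | right _ => 0 end.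

(** T_s eps_t = eps_{st}, i.e. (T_s xi)(u) = xi(s^{-1}u) (0 if s^{-1}u \notin P) *)
Definition Tiso (s : G) : Op := fun xi u => extG (proj1_sig xi) (mul (inv s) (proj1_sig u)).
(** its adjoint: (T_s^* xi)(t) = xi(st) *)
Definition Tadj (s : G) : Op := fun xi t => extG (proj1_sig xi) (mul s (proj1_sig t)).

Definition Ddiag : set Op :=
  nclosure op_le (span opadd opscale opzero
                   [set X | exists2 s, P s & X = opcomp (Tiso s) (Tadj s)]).

Definition Mop (f : Pt -> CC) : Op := fun xi t => f t * proj1_sig xi t.

Definition c0_iotaP : set Op := [set X | exists2 f, c0_P f & X = Mop f].

End Operators.

Definition B_P (G : Type) (mul : G -> G -> G) (inv : G -> G) (P : set G)
  : set (Ptype P -> CC) :=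
  nclosure (@supnorm_le G P)
    (span (@fadd G P) (@fscale G P) (@fzero G P)
          [set f | exists2 s, P s & f = chi mul inv s]).

(* Main.v *)
Require Import Defs.
From mathcomp Require Import all_boot all_order all_algebra complex.
From mathcomp Require Import boolp classical_sets reals Rstruct.
From mathcomp Require Import ring lra.
Set Implicit Arguments.
Unset Strict Implicit.
Unset Printing Implicit Defensive.
Import Order.TTheory GRing.Theory Num.Theory.
Local Open Scope ring_scope.
Lemma third_false : ~ ((1 : Rdefinitions.R) <= 3^-1 + 3^-1). Proof. lra. Qed.

Local Open Scope complex_scope.
Section RealAux.
Local Notation R := Rdefinitions.R.
Lemma rle_addl (M r : R) : 0 <= M -> r <= M + r. Proof. move=> h; lra. Qed.
Lemma rle_addr (M r : R) : 0 <= r -> M <= M + r. Proof. move=> h; lra. Qed.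
Lemma rhalf (e : R) : 0 < e -> 0 < e / 2. Proof. move=> h; lra. Qed.
Lemma rhalf2 (e : R) : e / 2 + e / 2 = e. Proof. lra. Qed.
Lemma rgt0_1 (M : R) : 0 <= M -> 0 < M + 1. Proof. move=> h; lra. Qed.
Lemma rle_1 (M : R) : 0 <= M -> 1 <= M + 1. Proof. move=> h; lra. Qed.

Lemma rM1 (M : R) : M <= `|M| + 1. Proof. have := ler_norm M; lra. Qed.
Lemma rM1p (M : R) : 0 < `|M| + 1. Proof. have := normr_ge0 M; lra. Qed.
Lemma rN2 (N : R) : 1 <= N -> N <= N ^+ 2.
Proof. move=> h; rewrite expr2 -{1}[N]mulr1; apply: ler_wpM2l => //; lra. Qed.
Lemma rsq (eps N : R) : 0 <= eps -> 1 <= N -> eps ^+ 2 * N <= (eps * N) ^+ 2.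
Proof. move=> h1 h2; rewrite exprMn; apply: ler_wpM2l; [exact: exprn_ge0|exact: rN2]. Qed.
Lemma rsmall (r N : R) : 0 < N -> (forall eps, 0 < eps -> r <= 2 * eps * N) -> r <= 0.
Proof.
move=> hN h; rewrite leNgt; apply/negP => hr.
have h4 : 0 < r / (4 * N) by apply: divr_gt0 => //; apply: mulr_gt0.
have := h _ h4.
have -> : 2 * (r / (4 * N)) * N = r / 2.
  field. 
  by rewrite gt_eqF.
move=> hh.
have : r <= r / 2 by [].
move: hr; clear; move=> hr. lra.
Qed.
Lemma rN1 (N : R) : 0 <= N -> 1 <= N + 1. Proof. move=> h; lra. Qed.
Lemma rlt01 (N : R) : 1 <= N -> 0 < N. Proof. move=> h; lra. Qed.
Lemma r2eN (eps N : R) : eps * N + eps * N = 2 * eps * N. Proof. ring. Qed.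
Definition nr (z : CC) : R := complex.Re `|z|.
Lemma nrE z : (nr z)%:C = `|z|.
Proof. by rewrite /nr RRe_real // normr_real. Qed.
Lemma nr_ge0 z : 0 <= nr z.
Proof. by rewrite -ler0c nrE normr_ge0. Qed.
Lemma lecR' (a b : R) : a <= b -> a%:C <= b%:C. Proof. by rewrite lecR. Qed.
End RealAux.

Local Open Scope complex_scope.
Local Open Scope classical_set_scope.

Section Main.
Variables (G : Type) (mul : G -> G -> G) (e : G) (inv : G -> G) (P : set G).
Hypothesis hQ : quasi_lattice_ordered mul e inv P.
Local Notation Pt := (Ptype P).
Local Notation le := (Defs.leP mul inv P).
Local Notation ch := (@chi G mul inv P).

Lemma gA x y z : mul x (mul y z) = mul (mul x y) z.
Proof. exact: (grp_mulA (qlo_group hQ)). Qed.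
Lemma g1x x : mul e x = x. Proof. exact: (grp_mul1g (qlo_group hQ)). Qed.
Lemma gx1 x : mul x e = x. Proof. exact: (grp_mulg1 (qlo_group hQ)). Qed.
Lemma gVx x : mul (inv x) x = e. Proof. exact: (grp_mulVg (qlo_group hQ)). Qed.
Lemma gxV x : mul x (inv x) = e. Proof. exact: (grp_mulgV (qlo_group hQ)). Qed.

Lemma gK x y : mul (inv x) (mul x y) = y.
Proof. by rewrite gA gVx g1x. Qed.
Lemma gKV x y : mul x (mul (inv x) y) = y.
Proof. by rewrite gA gxV g1x. Qed.
Lemma inv_e : inv e = e.
Proof. by rewrite -[inv e]gx1 gVx. Qed.
Lemma g_cancel x y z : mul x y = mul x z -> y = z.
Proof. by move=> h; rewrite -(gK x y) h gK. Qed.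
Lemma invM a b : inv (mul a b) = mul (inv b) (inv a).
Proof.
have h : mul (mul a b) (mul (inv b) (inv a)) = e.
  by rewrite -gA (gA b) gxV g1x gxV.
apply: (@g_cancel (mul a b)); by rewrite h gxV.
Qed.

Lemma P_e : P e. Proof. by case: (proj2 (qlo_cap hQ e) erefl). Qed.
Lemma P_mul x y : P x -> P y -> P (mul x y). Proof. exact: (qlo_semigroup hQ). Qed.

Lemma leP_trans x y z : le x y -> le y z -> le x z.
Proof. rewrite /Defs.leP => h1 h2. by have := P_mul h1 h2; rewrite -gA gKV. Qed.

Lemma le_eP t : le e t <-> P t.
Proof. by rewrite /Defs.leP inv_e g1x. Qed.

Lemma le_s_e s : P s -> le s e -> s = e.
Proof. rewrite /Defs.leP gx1 => h1 h2. exact: (proj1 (qlo_cap hQ s)). Qed.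

Lemma mul_neq_e f p : P f -> P p -> f <> e -> mul f p <> e.
Proof.
move=> Pf Pp fe h; apply: fe; apply: (proj1 (qlo_cap hQ f)); split => //.
have : p = inv f by rewrite -(gK f p) h gx1.
by move=> <-.
Qed.

Lemma sig_eq (a b : Pt) : proj1_sig a = proj1_sig b -> a = b.
Proof.
case: a => x hx; case: b => y hy /= exy; subst y; congr exist; exact: Prop_irrelevance.
Qed.

Definition pe : Pt := exist _ e P_e.

Lemma chi1 s t : le s (proj1_sig t) -> ch s t = 1.
Proof. by rewrite /chi; case: pselect. Qed.
Lemma chi0 s t : ~ le s (proj1_sig t) -> ch s t = 0.
Proof. by rewrite /chi; case: pselect. Qed.
Lemma chi_e t : ch e t = 1.
Proof. apply: chi1; apply: (proj2 (le_eP _)); exact: (proj2_sig t). Qed.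
Lemma chi_norm s t : `|ch s t| <= 1.
Proof. by rewrite /chi; case: pselect => h; rewrite ?normr1 ?normr0. Qed.


Definition LS (S : set (Pt -> CC)) (f : Pt -> CC) :=
  exists L : seq (CC * (Pt -> CC)), (forall p, List.In p L -> S p.2) /\
    forall t, f t = \sum_(p <- L) p.1 * p.2 t.

Lemma big_fadd_seq (I : Type) (r : seq I) (F : I -> Pt -> CC) t :
  (\big[@fadd G P/@fzero G P]_(i <- r) F i) t = \sum_(i <- r) F i t.
Proof. elim: r => [|a r IH]; by rewrite ?big_nil ?big_cons //= /fadd IH. Qed.

Lemma big_fadd_ord n (F : 'I_n -> Pt -> CC) t :
  (\big[@fadd G P/@fzero G P]_(i < n) F i) t = \sum_(i < n) F i t.
Proof. exact: big_fadd_seq. Qed.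

Lemma span_LS S f : Defs.span (@fadd G P) (@fscale G P) (@fzero G P) S f -> LS S f.
Proof.
case=> n [c [g [hg ->]]].
exists [seq (c i, g i) | i <- index_enum 'I_n]; split.
- move=> p /List.in_map_iff [i [<- _]]; exact: hg.
- move=> t; rewrite big_fadd_ord big_map; by [].
Qed.

Lemma in_nth (A : Type) (x0 : A) (L : seq A) i :
  (i < size L)%N -> List.In (nth x0 L i) L.
Proof. elim: L i => [|a L IH] [|i] //= h; [left|right; apply: IH] => //. Qed.

Lemma LS_span S f : LS S f -> Defs.span (@fadd G P) (@fscale G P) (@fzero G P) S f.
Proof.
case=> L [hL hf].
exists (size L), (fun i => (tnth (in_tuple L) i).1),
  (fun i => (tnth (in_tuple L) i).2); split.
- move=> i; apply: hL; rewrite (tnth_nth (0, fun _ => 0)); exact: in_nth.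
- apply: funext => t; rewrite big_fadd_ord hf (big_tnth _ _ L); by [].
Qed.

Lemma LS_ext S f g : LS S f -> (forall t, g t = f t) -> LS S g.
Proof. case=> L [hL hf] h; exists L; split => // t; by rewrite h hf. Qed.

Lemma LS_zero S : LS S (fun _ => 0).
Proof. exists [::]; split => // t; by rewrite big_nil. Qed.

Lemma LS_gen S g : S g -> LS S g.
Proof. move=> h; exists [:: (1, g)]; split; first by move=> p [<-|[]].
move=> t; by rewrite big_seq1 mul1r. Qed.

Lemma LS_add S f g : LS S f -> LS S g -> LS S (fun t => f t + g t).
Proof.
case=> L1 [h1 e1] [L2 [h2 e2]]; exists (L1 ++ L2); split.
- by move=> p hp; case: (List.in_app_or _ _ _ hp); [apply: h1|apply: h2].
- by move=> t; rewrite big_cat e1 e2.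
Qed.

Lemma LS_scale S c f : LS S f -> LS S (fun t => c * f t).
Proof.
case=> L [h1 e1]; exists [seq (c * p.1, p.2) | p <- L]; split.
- by move=> p /List.in_map_iff [q [<- /h1]].
- move=> t; rewrite big_map e1 mulr_sumr; apply: eq_bigr => p _ /=; by rewrite mulrA.
Qed.

Lemma LS_sum S (I : Type) (r : seq I) (F : I -> Pt -> CC) :
  (forall i, List.In i r -> LS S (F i)) -> LS S (fun t => \sum_(i <- r) F i t).
Proof.
elim: r => [|a r IH] h.
- apply: (LS_ext (LS_zero S)) => t; by rewrite big_nil.
- apply: (LS_ext (LS_add (h a (or_introl erefl)) (IH (fun i hi => h i (or_intror hi))))).
  by move=> t; rewrite big_cons.
Qed.

Lemma LS_mul S f g :
  (forall u v, S u -> S v -> LS S (fun t => u t * v t)) ->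
  LS S f -> LS S g -> LS S (fun t => f t * g t).
Proof.
move=> hS [L1 [h1 e1]] [L2 [h2 e2]].
apply: (LS_ext (f := fun t => \sum_(p <- L1) \sum_(q <- L2)
   (p.1 * q.1) * (p.2 t * q.2 t))).
- apply: LS_sum => p hp; apply: LS_sum => q hq; apply: LS_scale; exact: hS (h1 _ hp) (h2 _ hq).
- move=> t; rewrite e1 e2 big_distrl; apply: eq_bigr => p _; rewrite big_distrr.
  apply: eq_bigr => q _ /=; by rewrite mulrACA.
Qed.


Definition gens : set (Pt -> CC) := [set f | exists2 s, P s & f = ch s].

Lemma gens_mul u v : gens u -> gens v -> LS gens (fun t => u t * v t).
Proof.
case=> s Ps ->; case=> r Pr ->.
case: (pselect (exists z, P z /\ le s z /\ le r z)) => hz.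
- have [z [Pz sz rz zl]] := qlo_lub hQ Ps Pr hz.
  apply: (LS_ext (LS_gen (g := ch z) _)); first by exists z.
  move=> t.
  case: (pselect (le s (proj1_sig t))) => hs; case: (pselect (le r (proj1_sig t))) => hr.
  + rewrite !chi1 ?mulr1 //; apply: zl => //; exact: (proj2_sig t).
  + rewrite (chi0 hr) mulr0 chi0 // => h; apply: hr; exact: leP_trans rz h.
  + rewrite (chi0 hs) mul0r chi0 // => h; apply: hs; exact: leP_trans sz h.
  + rewrite (chi0 hs) mul0r chi0 // => h; apply: hs; exact: leP_trans sz h.
- apply: (LS_ext (LS_zero _)) => t.
  case: (pselect (le s (proj1_sig t))) => hs; last by rewrite (chi0 hs) mul0r.
  case: (pselect (le r (proj1_sig t))) => hr; last by rewrite (chi0 hr) mulr0.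
  exfalso; apply: hz; exists (proj1_sig t); split => //; exact: (proj2_sig t).
Qed.

Definition delta (t0 : Pt) : Pt -> CC := fun t => if pselect (t = t0) then 1 else 0.

Lemma delta_eq t0 : delta t0 t0 = 1.
Proof. by rewrite /delta; case: pselect. Qed.
Lemma delta_neq t0 t : t <> t0 -> delta t0 t = 0.
Proof. by rewrite /delta; case: pselect. Qed.

Lemma prod_in1 (I : Type) (r : seq I) (F : I -> CC) :
  (forall i, List.In i r -> F i = 1) -> \prod_(i <- r) F i = 1.
Proof.
elim: r => [|a r IH] h; first by rewrite big_nil.
by rewrite big_cons h ?IH ?mul1r //; [move=> i hi; apply: h; right|left].
Qed.

Lemma prod_in0 (I : Type) (r : seq I) (F : I -> CC) i :
  List.In i r -> F i = 0 -> \prod_(i <- r) F i = 0.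
Proof.
elim: r => [|a r IH] //= [->|hi] h; rewrite big_cons; first by rewrite h mul0r.
by rewrite IH ?mulr0.
Qed.

Lemma LS_delta : has_FESSPE mul e P -> forall t0, LS gens (delta t0).
Proof.
case=> F [hF1 hF2] t0.
set s0 := proj1_sig t0.
have Ps0 : P s0 := proj2_sig t0.
have gen : forall F', (forall f, List.In f F' -> P f) -> forall g, LS gens g ->
   LS gens (fun t => g t * \prod_(f <- F') (1 - ch (mul s0 f) t)).
  elim=> [|a F' IH] hF' g hg.
  - apply: (LS_ext hg) => t; by rewrite big_nil mulr1.
  - have h1 : LS gens (fun t => 1 - ch (mul s0 a) t).
      apply: (LS_ext (LS_add (LS_gen (g := ch e) _) (LS_scale (-1) (LS_gen (g := ch (mul s0 a)) _)))).
      + exists e; [exact: P_e|by []].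
      + exists (mul s0 a) => //; apply: P_mul => //; apply: hF'; by left.
      + move=> t; by rewrite chi_e mulN1r.
    have := IH (fun f hf => hF' f (or_intror hf)) _ (LS_mul gens_mul hg h1).
    move=> h2; apply: (LS_ext h2) => t; by rewrite big_cons mulrA.
have Hg : gens (ch s0) by exists s0.
apply: (LS_ext (gen F (fun f hf => proj1 (hF1 f hf)) _ (LS_gen Hg))).
move=> t.
case: (pselect (le s0 (proj1_sig t))) => h; last first.
  rewrite (chi0 h) mul0r delta_neq // => et; apply: h; rewrite et /Defs.leP gVx; exact: P_e.
rewrite chi1 // mul1r.
case: (pselect (t = t0)) => et.
- rewrite et delta_eq prod_in1 // => f hf; rewrite chi0 ?subr0 //.
  rewrite /Defs.leP invM -gA gVx gx1 => hP.
  have [Pf nf] := hF1 f hf; apply: nf; exact: (proj1 (qlo_cap hQ f)).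
- rewrite delta_neq //.
  have ye : mul (inv s0) (proj1_sig t) <> e.
    move=> h0; apply: et; apply: sig_eq; by rewrite -(gKV s0 (proj1_sig t)) h0 gx1.
  have [f [p [hf Pp hy]]] := proj1 (hF2 _) (conj h ye).
  apply/esym; apply: (prod_in0 hf); rewrite chi1 ?subrr //.
  by rewrite /Defs.leP invM -gA hy gK.
Qed.

Lemma c0_delta t0 : c0_P (delta t0).
Proof.
move=> eps he; exists [:: t0] => t ht; rewrite delta_neq; first by rewrite normr0 ler0c ltW.
by move=> et; apply: ht; left.
Qed.


Lemma B_P_LS f : @B_P G mul inv P f <->
  forall eps, 0 < eps -> exists2 g, LS gens g & supnorm_le f g eps.
Proof.
split => h eps he; have [g hg hfg] := h eps he; exists g => //;
  [exact: span_LS|exact: LS_span].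
Qed.

Lemma LS_cut f K : has_FESSPE mul e P ->
  LS gens (fun t => if pselect (List.In t K) then f t else 0).
Proof.
move=> hF; elim: K => [|a K IH].
  by apply: (LS_ext (LS_zero _)) => t; case: pselect.
case: (pselect (List.In a K)) => ha.
- apply: (LS_ext IH) => t.
  case: pselect => h1; case: pselect => h2 //.
  + exfalso; case: h1 => [ea|//]; apply: h2; by rewrite -ea.
  + exfalso; apply: h1; by right.
- apply: (LS_ext (LS_add IH (LS_scale (f a) (LS_delta hF a)))) => t.
  case: (pselect (t = a)) => eta.
  + subst t; rewrite delta_eq mulr1.
    case: pselect => h1; last by exfalso; apply: h1; left.
    case: pselect => h2 //; by rewrite add0r.
  + rewrite delta_neq // mulr0 addr0.
    case: pselect => h1; case: pselect => h2 //.
    * exfalso; case: h1 => [ea|//]; by apply: eta.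
    * exfalso; apply: h1; by right.
Qed.

Lemma c0_sub_BP : has_FESSPE mul e P -> @c0_P G P `<=` @B_P G mul inv P.
Proof.
move=> hF f hf; apply/B_P_LS => eps he.
have [K hK] := hf eps he.
exists (fun t => if pselect (List.In t K) then f t else 0); first exact: LS_cut.
move=> t; case: pselect => h.
- by rewrite subrr normr0 ler0c ltW.
- by rewrite subr0; apply: hK.
Qed.

Lemma sum_in_eq (I : Type) (r : seq I) (F F' : I -> CC) :
  (forall i, List.In i r -> F i = F' i) -> \sum_(i <- r) F i = \sum_(i <- r) F' i.
Proof.
elim: r => [|a r IH] h; first by rewrite !big_nil.
rewrite !big_cons h; last by left.
by rewrite IH // => i hi; apply: h; right.
Qed.

Lemma extract_gens (L : seq (CC * (Pt -> CC))) :
  (forall p, List.In p L -> gens p.2) ->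
  exists FS : seq G,
    (forall s, List.In s FS -> P s /\ s <> e) /\
    (forall p, List.In p L -> exists s, [/\ P s, p.2 = ch s & (s = e \/ List.In s FS)]).
Proof.
elim: L => [|a L IH] hL.
  by exists [::]; split.
have [FS [h1 h2]] := IH (fun p hp => hL p (or_intror hp)).
have [s Ps es] := hL a (or_introl erefl).
case: (pselect (s = e)) => se.
- exists FS; split => // p [<-|hp]; first by exists s; split => //; left.
  exact: h2.
- exists (s :: FS); split.
  + by move=> r [<-|hr]; [split|apply: h1].
  + move=> p [<-|hp]; first by exists s; split => //; right; left.
    have [r [Pr er hr]] := h2 p hp; exists r; split => //.
    case: hr => [->|hr]; [by left|by right; right].
Qed.

Lemma BP_FESSPE : @B_P G mul inv P (delta pe) -> has_FESSPE mul e P.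
Proof.
move=> H.
have [g hg hfg] := (proj1 (B_P_LS _) H) (3^-1) ltac:(lra).
case: hg => L [hL eg].
have [FS [h1 h2]] := extract_gens hL.
exists FS; split => //.
move=> x; split; last first.
  case=> f [p [hf Pp ->]]; have [Pf fe] := h1 f hf.
  split; [exact: P_mul|exact: mul_neq_e].
case=> Px xe.
apply: contrapT => hno.
set tx : Pt := exist _ x Px.
have hs : forall s, List.In s FS -> ~ le s x.
  move=> s hs hsx; apply: hno; exists s, (mul (inv s) x); split => //.
  by rewrite gKV.
have egx : g tx = g pe.
  rewrite !eg; apply: sum_in_eq => p hp.
  have [s [Ps -> hse]] := h2 p hp.
  case: hse => [->|hsF]; first by rewrite !chi_e.
  rewrite !chi0 //; last exact: hs.
  have [_ se] := h1 s hsF; move=> hl; apply: se; exact: le_s_e.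
have a1 := hfg pe; have a2 := hfg tx.
rewrite delta_eq in a1.
rewrite delta_neq in a2; last first.
  move=> h; apply: xe; by have := f_equal (@proj1_sig _ _) h.
rewrite sub0r normrN egx in a2.
have : `|(1 : CC)| <= (3^-1)%:C + (3^-1)%:C.
  have -> : (1:CC) = (1 - g pe) + g pe by rewrite subrK.
  exact: (le_trans (ler_normD _ _) (lerD a1 a2)).
rewrite normr1 -rmorphD -(rmorph1 (real_complex Rdefinitions.R)) lecR => hh.
exact: third_false hh.
Qed.

Lemma fin_bound (f : Pt -> CC) (K : seq Pt) :
  exists M : Rdefinitions.R, 0 <= M /\ forall t, List.In t K -> `|f t| <= M%:C.
Proof.
elim: K => [|a K [M [M0 hM]]]; first by exists 0; split.
exists (M + nr (f a)); split; first by rewrite addr_ge0 // nr_ge0.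
move=> t [<-|ht].
- by rewrite -nrE lecR rle_addl.
- apply: (le_trans (hM t ht)); by rewrite lecR rle_addr // nr_ge0.
Qed.

Lemma c0_bounded f : @c0_P G P f -> @bounded G P f.
Proof.
move=> hf; have [K hK] := hf 1 ltr01.
have [M [M0 hM]] := fin_bound f K.
exists (M + 1) => t; case: (pselect (List.In t K)) => ht.
- apply: (le_trans (hM t ht)); by rewrite lecR rle_addr.
- apply: (le_trans (hK t ht)); by rewrite lecR rle_1.
Qed.

Lemma c0_mulb a x : @bounded G P a -> @c0_P G P x -> @c0_P G P (fun t => a t * x t).
Proof.
case=> M hM hx eps he.
set M' := `|M| + 1.
have M'0 : 0 < M' by exact: rM1p.
have [K hK] := hx (eps / M') (divr_gt0 he M'0).
exists K => t ht; rewrite normrM.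
have -> : eps%:C = M'%:C * (eps / M')%:C.
  by rewrite -rmorphM mulrC divfK // gt_eqF.
apply: ler_pM; [exact: normr_ge0|exact: normr_ge0| |exact: hK].
apply: (le_trans (hM t)); rewrite lecR; exact: rM1.
Qed.

Lemma c0_zero : @c0_P G P (@fzero G P).
Proof. move=> eps he; exists [::] => t _; by rewrite /fzero normr0 ler0c ltW. Qed.

Lemma c0_add f g : @c0_P G P f -> @c0_P G P g -> @c0_P G P (fun t => f t + g t).
Proof.
move=> hf hg eps he.
have [K1 h1] := hf _ (rhalf he); have [K2 h2] := hg _ (rhalf he).
exists (K1 ++ K2) => t ht.
have n1 : ~ List.In t K1 by move=> h; apply: ht; apply: List.in_or_app; left.
have n2 : ~ List.In t K2 by move=> h; apply: ht; apply: List.in_or_app; right.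
apply: (le_trans (ler_normD _ _)); rewrite -(rhalf2 eps) rmorphD.
exact: lerD (h1 t n1) (h2 t n2).
Qed.

Lemma c0_closed x : nclosure (@supnorm_le G P) (@c0_P G P) x -> @c0_P G P x.
Proof.
move=> hx eps he.
have [y hy hxy] := hx _ (rhalf he).
have [K hK] := hy _ (rhalf he).
exists K => t ht.
have -> : x t = (x t - y t) + y t by rewrite subrK.
apply: (le_trans (ler_normD _ _)); rewrite -(rhalf2 eps) rmorphD.
exact: lerD (hxy t) (hK t ht).
Qed.

Lemma bounded_const c : @bounded G P (fun _ => c).
Proof. exists (nr c) => t; by rewrite nrE. Qed.

Lemma sum_in_le (I : Type) (r : seq I) (F F' : I -> CC) :
  (forall i, List.In i r -> F i <= F' i) -> \sum_(i <- r) F i <= \sum_(i <- r) F' i.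
Proof.
elim: r => [|a r IH] h; first by rewrite !big_nil.
rewrite !big_cons; apply: lerD; first by apply: h; left.
by apply: IH => i hi; apply: h; right.
Qed.

Lemma LS_bounded g : LS gens g -> @bounded G P g.
Proof.
case=> L [hL eg]; exists (\sum_(p <- L) nr p.1) => t.
rewrite eg rmorph_sum; apply: (le_trans (ler_norm_sum _ _ _)).
apply: sum_in_le => p hp /=; rewrite nrE normrM.
have [s _ ->] := hL p hp.
rewrite -{2}[`|p.1|]mulr1; apply: ler_wpM2l; [exact: normr_ge0|exact: chi_norm].
Qed.

Lemma BP_bounded a : @B_P G mul inv P a -> @bounded G P a.
Proof.
move=> /B_P_LS h; have [g hg hag] := h 1 ltr01.
have [M hM] := LS_bounded hg.
exists (1 + M) => t.
have -> : a t = (a t - g t) + g t by rewrite subrK.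
apply: (le_trans (ler_normD _ _)); rewrite rmorphD rmorph1.
exact: lerD (hag t) (hM t).
Qed.

Lemma item1 : has_FESSPE mul e P <-> (@c0_P G P `<=` @B_P G mul inv P).
Proof.
split; first exact: c0_sub_BP.
move=> h; apply: BP_FESSPE; apply: h; exact: c0_delta.
Qed.

Lemma nonzero_pt (x : Pt -> CC) : x <> @fzero G P -> exists t, x t <> 0.
Proof.
move=> hx; apply: contrapT => hn; apply: hx; apply: funext => t.
by apply: contrapT => h; apply: hn; exists t.
Qed.

Lemma item2 : has_FESSPE mul e P <->
  essential_ideal (@fadd G P) (@fscale G P) (@fmul G P) (@fzero G P)
    (@supnorm_le G P) (@B_P G mul inv P) (@c0_P G P).
Proof.
split; last first.
  case=> [[hsub _ _ _ _] _]; apply: BP_FESSPE; apply: hsub; exact: c0_delta.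
move=> hF; split.
  split.
  - exact: c0_sub_BP.
  - split; first exact: c0_zero.
    move=> x y hx hy; exact: c0_add.
  - move=> c x hx; exact: (c0_mulb (bounded_const c) hx).
  - move=> a x ha hx; split; first exact: (c0_mulb (BP_bounded ha) hx).
    have := c0_mulb (BP_bounded ha) hx.
    have -> : (fun t => a t * x t) = @fmul G P x a by apply: funext => t; rewrite /fmul mulrC.
    by [].
  - move=> x _; exact: c0_closed.
move=> J [hJB [hJ0 hJadd] hJsc hJmul hJcl] [x [Jx xnz]].
have [t xt] := nonzero_pt xnz.
have Bd : @B_P G mul inv P (delta t) by apply: c0_sub_BP => //; exact: c0_delta.
exists (@fmul G P (delta t) x); split.
- have := c0_mulb (BP_bounded (hJB _ Jx)) (c0_delta t).
  have -> : (fun t' => x t' * delta t t') = @fmul G P (delta t) x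
    by apply: funext => t'; rewrite /fmul mulrC.
  by [].
- exact: (hJmul _ _ Bd Jx).1.
- move=> h; apply: xt; have := f_equal (fun f => f t) h.
  by rewrite /fmul /fzero delta_eq mul1r.
Qed.

Definition bnd2 (xi : Pt -> CC) (N : Rdefinitions.R) :=
  forall n (k : 'I_n -> Pt), injective k -> sqnorm_on k xi <= N%:C.

Lemma bnd2_ge0 xi N : bnd2 xi N -> 0 <= N.
Proof.
move=> h; have := h 0%N (fun _ => pe) (fun i => match i with Ordinal _ hi => ltac:(done) end).
by rewrite /sqnorm_on big_ord0 ler0c.
Qed.

Lemma bnd2_pt xi N u : bnd2 xi N -> `|xi u| ^+ 2 <= N%:C.
Proof.
move=> h; have := h 1%N (fun _ => u) _.
rewrite /sqnorm_on big_ord1; apply.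
by move=> i j _; rewrite (ord1 i) (ord1 j).
Qed.

Lemma sq_le (z : CC) (r : Rdefinitions.R) : 0 <= r -> `|z| ^+ 2 <= (r ^+ 2)%:C -> `|z| <= r%:C.
Proof.
move=> r0; rewrite rmorphXn ler_pXn2r //; rewrite nnegrE ?normr_ge0 ?ler0c //.
Qed.

Lemma l2_pt eta xi c N u : l2_le eta xi c -> bnd2 xi N -> `|eta u| ^+ 2 <= (c ^+ 2 * N)%:C.
Proof.
move=> h hN; have := h N hN 1%N (fun _ => u) _.
rewrite /sqnorm_on big_ord1; apply.
by move=> i j _; rewrite (ord1 i) (ord1 j).
Qed.

Lemma delta_bnd2 t0 : bnd2 (delta t0) 1.
Proof.
move=> n k hk; rewrite /sqnorm_on.
case: (pselect (exists i, k i = t0)) => [[i0 hi0]|hn].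
- rewrite (bigD1 i0) //= hi0 delta_eq normr1 expr1n big1 ?addr0 //.
  move=> i hi; rewrite delta_neq ?normr0 ?expr0n //.
  move=> hki; move/eqP: hi; apply; apply: hk; by rewrite hki hi0.
- rewrite big1 ?ler0c // => i _; rewrite delta_neq ?normr0 ?expr0n //.
  by move=> h; apply: hn; exists i.
Qed.

Definition dl2 (t0 : Pt) : l2 P := exist _ (delta t0) (ex_intro _ 1 (delta_bnd2 t0)).

Lemma l2_mulb (f xi : Pt -> CC) M N : (forall t, `|f t| <= M%:C) -> bnd2 xi N ->
  bnd2 (fun t => f t * xi t) (M ^+ 2 * N).
Proof.
move=> hM hN n k hk.
have M0 : 0 <= M%:C by apply: le_trans (hM pe); exact: normr_ge0.
rewrite /sqnorm_on rmorphM rmorphXn.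
apply: (@le_trans _ _ (M%:C ^+ 2 * sqnorm_on k xi)); last first.
  by apply: ler_wpM2l; [exact: exprn_ge0|exact: hN].
rewrite /sqnorm_on mulr_sumr; apply: ler_sum => i _.
rewrite normrM exprMn; apply: ler_wpM2r; first exact: exprn_ge0 (normr_ge0 _).
by rewrite !expr2; apply: ler_pM; rewrite ?normr_ge0.
Qed.

Local Notation Mop := (@Mop G P).

Lemma l2_Mop f (xi : l2 P) : @bounded G P f -> is_l2 (Mop f xi).
Proof.
case=> M hM; case: xi => x [N hN] /=; exists (M ^+ 2 * N).
exact: (l2_mulb hM hN).
Qed.

Lemma opcomp_Mop h f : @bounded G P f ->
  opcomp (Mop h) (Mop f) = Mop (fun t => h t * f t).
Proof.
move=> hf; apply: funext => xi; apply: funext => t; rewrite /opcomp.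
case: pselect => [hl|hn]; first by rewrite /Mop /= mulrA.
by exfalso; apply: hn; exact: l2_Mop.
Qed.

Lemma Mop_add f g : opadd (Mop f) (Mop g) = Mop (fun t => f t + g t).
Proof. apply: funext => xi; apply: funext => t; by rewrite /opadd /Mop mulrDl. Qed.
Lemma Mop_scale c f : opscale c (Mop f) = Mop (fun t => c * f t).
Proof. apply: funext => xi; apply: funext => t; by rewrite /opscale /Mop mulrA. Qed.
Lemma Mop_zero : @opzero G P = Mop (@fzero G P).
Proof. apply: funext => xi; apply: funext => t; by rewrite /opzero /Mop /fzero mul0r. Qed.

Lemma extG_in (xi : Pt -> CC) g (h : P g) : extG xi g = xi (exist _ g h).
Proof.
rewrite /extG; case: pselect => [h'|hn]; last by [].
by congr xi; apply: sig_eq.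
Qed.
Lemma extG_out (xi : Pt -> CC) g : ~ P g -> extG xi g = 0.
Proof. by rewrite /extG; case: pselect. Qed.

Lemma TT_Mop s : P s -> opcomp (Tiso mul inv s) (Tadj mul s) = Mop (ch s).
Proof.
move=> Ps.
have l2T : forall xi : l2 P, is_l2 (Tadj mul s xi).
  case=> x [N hN]; exists N => n k hk.
  pose k' := fun i => exist P (mul s (proj1_sig (k i))) (P_mul Ps (proj2_sig (k i))).
  have hk' : injective k'.
    move=> i j hij; apply: hk; apply: sig_eq; apply: (@g_cancel s).
    exact: (f_equal (@proj1_sig _ _) hij).
  apply: (le_trans _ (hN n k' hk')); rewrite /sqnorm_on le_eqVlt; apply/orP; left; apply/eqP.
  apply: eq_bigr => i _; by rewrite /Tadj /= (extG_in _ (P_mul Ps (proj2_sig (k i)))).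
apply: funext => xi; apply: funext => u; rewrite /opcomp.
case: pselect => [hl|hn]; last by exfalso; apply: hn; exact: l2T.
rewrite /Tiso /= /Mop.
case: (pselect (P (mul (inv s) (proj1_sig u)))) => hp.
- rewrite (extG_in _ hp) chi1 // mul1r /Tadj /= (extG_in _ (P_mul Ps hp)).
  by congr (proj1_sig xi); apply: sig_eq; rewrite /= gKV.
- by rewrite extG_out // chi0 // mul0r.
Qed.

Definition opgens : set (Op P) :=
  [set X | exists2 s, P s & X = opcomp (Tiso mul inv s) (Tadj mul s)].

Lemma big_opadd_seq (I : Type) (r : seq I) (F : I -> Op P) xi t :
  (\big[@opadd G P/@opzero G P]_(i <- r) F i) xi t = \sum_(i <- r) F i xi t.
Proof. elim: r => [|a r IH]; by rewrite ?big_nil ?big_cons //= /opadd IH. Qed.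

Lemma big_opadd_ord n (F : 'I_n -> Op P) xi t :
  (\big[@opadd G P/@opzero G P]_(i < n) F i) xi t = \sum_(i < n) F i xi t.
Proof. exact: big_opadd_seq. Qed.

Lemma span_op X : Defs.span (@opadd G P) (@opscale G P) (@opzero G P) opgens X ->
  exists g, LS gens g /\ X = Mop g.
Proof.
case=> n [c [g [hg ->]]].
have hc : forall i, exists s, P s /\ g i = opcomp (Tiso mul inv s) (Tadj mul s).
  by move=> i; have [s Ps ->] := hg i; exists s.
have [sf hsf] := choice hc.
exists (fun t => \sum_(i < n) c i * ch (sf i) t); split.
- apply: LS_sum => i _; apply: LS_scale; apply: LS_gen; exists (sf i) => //.
  exact: (hsf i).1.
- apply: funext => xi; apply: funext => t; rewrite big_opadd_ord /Mop mulr_suml.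
  apply: eq_bigr => i _; have [Ps ->] := hsf i.
  by rewrite /opscale TT_Mop // /Mop mulrA.
Qed.

Lemma LS_op g : LS gens g -> Defs.span (@opadd G P) (@opscale G P) (@opzero G P) opgens (Mop g).
Proof.
case=> L [hL eg].
exists (size L), (fun i => (tnth (in_tuple L) i).1),
  (fun i => Mop (tnth (in_tuple L) i).2); split.
- move=> i; have := hL (tnth (in_tuple L) i).
  rewrite (tnth_nth (0, fun _ => 0)) => /(_ (in_nth _ (ltn_ord i))) [s Ps ->].
  by exists s => //; rewrite TT_Mop.
- apply: funext => xi; apply: funext => t; rewrite big_opadd_ord /Mop eg (big_tnth _ _ L).
  rewrite mulr_suml; apply: eq_bigr => i _; by rewrite /opscale /Mop mulrA.
Qed.

Lemma op_le_sup a b eps : 0 <= eps -> op_le (Mop a) (Mop b) eps -> @supnorm_le G P a b eps.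
Proof.
move=> e0 h t; apply: sq_le => //.
have := l2_pt t (h (dl2 t)) (delta_bnd2 t).
by rewrite /Mop /= delta_eq !mulr1.
Qed.

Lemma sup_op_le a b eps : @supnorm_le G P a b eps -> op_le (Mop a) (Mop b) eps.
Proof.
move=> h xi N hN.
have -> : (fun t => Mop a xi t - Mop b xi t) = (fun t => (a t - b t) * proj1_sig xi t).
  by apply: funext => t; rewrite /Mop mulrBl.
exact: (l2_mulb h hN).
Qed.

Lemma BP_Ddiag f : @B_P G mul inv P f -> @Ddiag G mul inv P (Mop f).
Proof.
move=> /B_P_LS h eps he; have [g hg hfg] := h eps he.
exists (Mop g); [exact: LS_op|exact: sup_op_le].
Qed.

Lemma Ddiag_BP f : @Ddiag G mul inv P (Mop f) -> @B_P G mul inv P f.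
Proof.
move=> h; apply/B_P_LS => eps he; have [y hy hfy] := h eps he.
have [g [hg ey]] := span_op hy; subst y.
exists g => //; exact: op_le_sup (ltW he) hfy.
Qed.

Lemma Ddiag_Mop X : @Ddiag G mul inv P X -> exists h, @bounded G P h /\ X = Mop h.
Proof.
move=> hX.
have approx : forall eps, 0 < eps -> exists2 g, LS gens g & op_le X (Mop g) eps.
  move=> eps he; have [y hy hXy] := hX eps he.
  have [g [hg ey]] := span_op hy; subst y; by exists g.
pose h := fun t => X (dl2 t) t.
have hB : forall g eps, 0 <= eps -> op_le X (Mop g) eps -> forall t, `|h t - g t| <= eps%:C.
  move=> g eps e0 hg t; apply: sq_le => //.
  have := l2_pt t (hg (dl2 t)) (delta_bnd2 t).
  by rewrite /Mop /= delta_eq !mulr1.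
exists h; split.
  have [g hg hXg] := approx 1 ltr01.
  have [M hM] := LS_bounded hg.
  exists (1 + M) => t.
  have -> : h t = (h t - g t) + g t by rewrite subrK.
  apply: (le_trans (ler_normD _ _)); rewrite rmorphD rmorph1.
  exact: lerD (hB g 1 ler01 hXg t) (hM t).
apply: funext => xi; apply: funext => u.
case: (proj2_sig xi) => N0 hN0.
have N00 := bnd2_ge0 hN0.
set N := N0 + 1.
have N1 : 1 <= N by exact: rN1.
have hN : bnd2 (proj1_sig xi) N.
  move=> n k hk; apply: (le_trans (hN0 n k hk)); by rewrite lecR rle_addr.
have hxu : `|proj1_sig xi u| <= N%:C.
  apply: sq_le; first exact: (le_trans ler01 N1).
  apply: (le_trans (bnd2_pt u hN)); by rewrite lecR rN2.
apply/eqP; rewrite -subr_eq0 -normr_eq0; apply/eqP.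
apply: le_anti; apply/andP; split; last exact: normr_ge0.
rewrite -nrE -(rmorph0 (real_complex Rdefinitions.R)) lecR.
apply: (rsmall (rlt01 N1)) => eps he.
rewrite -lecR nrE.
have [g hg hXg] := approx eps he.
have e0 := ltW he.
have h1 : `|X xi u - g u * proj1_sig xi u| <= (eps * N)%:C.
  apply: sq_le; first by apply: mulr_ge0 => //; exact: (le_trans ler01 N1).
  apply: (le_trans (l2_pt u (hXg xi) hN)); by rewrite lecR rsq.
have -> : X xi u - Mop h xi u = (X xi u - g u * proj1_sig xi u) + (g u - h u) * proj1_sig xi u.
  by rewrite /Mop mulrBl addrA subrK.
apply: (le_trans (ler_normD _ _)); rewrite -r2eN rmorphD.
apply: lerD => //; rewrite normrM rmorphM.
apply: ler_pM; rewrite ?normr_ge0 //; by rewrite distrC; apply: hB.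
Qed.

Lemma item3 : has_FESSPE mul e P <->
  essential_ideal (@opadd G P) (@opscale G P) (@opcomp G P) (@opzero G P)
    (@op_le G P) (@Ddiag G mul inv P) (@c0_iotaP G P).
Proof.
split; last first.
  case=> [[hsub _ _ _ _] _]; apply/item1 => f hf.
  apply: Ddiag_BP; apply: hsub; by exists f.
move=> hF; split.
  split.
  - move=> X [f hf ->]; apply: BP_Ddiag; exact: c0_sub_BP hF f hf.
  - split; first by exists (@fzero G P); [exact: c0_zero|exact: Mop_zero].
    move=> X Y [f hf ->] [g hg ->]; exists (fun t => f t + g t); first exact: c0_add.
    exact: Mop_add.
  - move=> c X [f hf ->]; exists (fun t => c * f t); last exact: Mop_scale.
    exact: (c0_mulb (bounded_const c) hf).
  - move=> a X ha [f hf ->]; have [h [hb ->]] := Ddiag_Mop ha; split.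
    + exists (fun t => h t * f t); first exact: c0_mulb hb hf.
      by rewrite opcomp_Mop //; exact: c0_bounded.
    + exists (fun t => h t * f t); first exact: c0_mulb hb hf.
      rewrite opcomp_Mop //; congr Mop; apply: funext => t; by rewrite mulrC.
  - move=> X hX hcl; have [h [hb ex]] := Ddiag_Mop hX; subst X.
    exists h => //; apply: c0_closed => eps he.
    have [y [f hf ey] hy] := hcl eps he; subst y.
    exists f => //; exact: op_le_sup (ltW he) hy.
move=> J [hJB [hJ0 hJadd] hJsc hJmul hJcl] [x [Jx xnz]].
have [h [hb ex]] := Ddiag_Mop (hJB _ Jx); subst x.
have [t ht] : exists t, h t <> 0.
  apply: contrapT => hn; apply: xnz; rewrite Mop_zero; congr Mop.
  apply: funext => t; apply: contrapT => h1; apply: hn; by exists t.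
have Bd := BP_Ddiag (c0_sub_BP hF (c0_delta t)).
exists (opcomp (Mop (delta t)) (Mop h)); split.
- exists (fun t' => delta t t' * h t'); last exact: opcomp_Mop.
  have := c0_mulb hb (c0_delta t).
  have -> : (fun t' => h t' * delta t t') = (fun t' => delta t t' * h t')
    by apply: funext => t'; rewrite mulrC.
  by [].
- exact: (hJmul _ _ Bd Jx).1.
- rewrite opcomp_Mop // => heq; apply: ht.
  have := f_equal (fun X => X (dl2 t) t) heq.
  by rewrite /Mop /opzero /= delta_eq mul1r mulr1.
Qed.

End Main.

Unset Implicit Arguments.
Local Close Scope complex_scope.
Local Close Scope ring_scope.

Theorem lemma6p4 (G : Type) (mul : G -> G -> G) (e : G) (inv : G -> G)
  (P : set G) (hQ : quasi_lattice_ordered mul e inv P) :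
  [/\ (has_FESSPE mul e P <-> (@c0_P G P `<=` @B_P G mul inv P)),
      (has_FESSPE mul e P <->
         essential_ideal (@fadd G P) (@fscale G P) (@fmul G P) (@fzero G P)
           (@supnorm_le G P) (@B_P G mul inv P) (@c0_P G P)) &
      (has_FESSPE mul e P <->
         essential_ideal (@opadd G P) (@opscale G P) (@opcomp G P) (@opzero G P)
           (@op_le G P) (@Ddiag G mul inv P) (@c0_iotaP G P))].
Proof.
split; [exact: (item1 hQ)|exact: (item2 hQ)|exact: (item3 hQ)].
Qed.
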